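(* For every $n\geq 1$, $M\geq 2$ and $\Upsilon>0$, $$\epsilon_{\mathrm{m}}^{\star}(n,M,\Upsilon)\;\geq\;\epsilon_{\mathrm{e}}^{\star}\Bigl(n+1,M,\tfrac{n\Upsilon}{n+1}\Bigr).$$
   Context: AWGN channel with noise variance $\sigma^2>0$: for input $\mathbf{x}\in\mathbb{R}^n$ the output $\mathbf{y}\in\mathbb{R}^n$ has density $w(\mathbf{y}|\mathbf{x})=\prod_{i=1}^n\varphi_{x_i,\sigma}(y_i)$, where $\varphi_{\mu,\sigma}(y)=\frac{1}{\sqrt{2\pi}\sigma}e^{-(y-\mu)^2/(2\sigma^2)}$. A codebook is $\mathcal{C}=\{\mathbf{c}_1,\dots,\mathbf{c}_M\}\subset\mathbb{R}^n$; a message $V$ uniform on $\{1,\dots,M\}$ is sent as $\mathbf{c}_V$, and the receiver uses maximum-likelihood decoding to produce $\hat V$; $P_e(\mathcal{C})=\Pr\{\hat V\neq V\}$ is the average error probability. Power-constrained families: $\mathcal{F}_{\mathrm{e}}(n,M,\Upsilon)=\{\mathcal{C}:\|\mathbf{c}_i\|^2=n\Upsilon\ \forall i\}$ (equal), $\mathcal{F}_{\mathrm{m}}(n,M,\Upsilon)=\{\mathcal{C}:\|\mathbf{c}_i\|^2\le n\Upsilon\ \forall i\}$ (maximal), $\mathcal{F}_{\mathrm{a}}(n,M,\Upsilon)=\{\mathcal{C}:\frac1M\sum_i\|\mathbf{c}_i\|^2\le n\Upsilon\}$ (average). For $i\in\{\mathrm{e},\mathrm{m},\mathrm{a}\}$,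 $\epsilon_i^{\star}(n,M,\Upsilon)=\inf_{\mathcal{C}\in\mathcal{F}_i(n,M,\Upsilon)}P_e(\mathcal{C})$ (with $\sigma^2$ fixed). *)

(* Defs.v *)
From Stdlib Require Import Reals Lra Lia.
Open Scope R_scope.

Fixpoint rsum (n : nat) (f : nat -> R) : R :=
  match n with O => 0 | S k => rsum k f + f k end.
Fixpoint rprod (n : nat) (f : nat -> R) : R :=
  match n with O => 1 | S k => rprod k f * f k end.

Definition phi (mu sigma y : R) : R :=
  / (sqrt (2 * PI) * sigma) * exp (- (y - mu) ^ 2 / (2 * sigma ^ 2)).

(* vectors of R^n are represented as nat -> R (only coordinates < n matter) *)
Definition vecR := nat -> R.

(* AWGN transition density w(y|x) = prod_{i<n} phi_{x_i,sigma}(y_i) *)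
Definition w (n : nat) (sigma : R) (y x : vecR) : R :=
  rprod n (fun i => phi (x i) sigma (y i)).

(* a codebook: message j (j < M) is sent as codeword C j *)
Definition codebook := nat -> vecR.

(* ML decoder (ties broken towards the smallest index):
   ml_best k = an index j < k maximizing w(y | C j), for k >= 1 *)
Fixpoint ml_best (n : nat) (sigma : R) (C : codebook) (y : vecR) (k : nat) : nat :=
  match k with
  | O => O
  | S O => O
  | S k' =>
      let b := ml_best n sigma C y k' in
      if Rlt_dec (w n sigma y (C b)) (w n sigma y (C k')) then k' else b
  end.

Definition ml_decode (n M : nat) (sigma : R) (C : codebook) (y : vecR) : nat :=
  ml_best n sigma C y M.

(* Riemann sum of f over the box [-T,T]^n with N subdivisions per axis,
   sampled at the lower-left corners of the cells *)
Fixpoint grid_sum (d N : nat) (T : R) (f : vecR -> R) : R :=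
  match d with
  | O => f (fun _ => 0)
  | S d' => rsum N (fun k =>
       grid_sum d' N T (fun y => f (fun i =>
          if Nat.eqb i d' then - T + INR k * (2 * T / INR N) else y i)))
  end.

Definition riemann_box (n N : nat) (T : R) (f : vecR -> R) : R :=
  grid_sum n N T f * (2 * T / INR N) ^ n.

(* (improper Riemann) integral over R^n:  I = lim_{m->oo} lim_{N->oo}
   Riemann sums over [-m,m]^n *)
Definition has_integral (n : nat) (f : vecR -> R) (I : R) : Prop :=
  exists B : nat -> R,
    (forall m : nat, Un_cv (fun N => riemann_box n (S N) (INR m) f) (B m)) /\
    Un_cv B I.

Definition err_ind (n M : nat) (sigma : R) (C : codebook) (v : nat) (y : vecR) : R :=
  if Nat.eqb (ml_decode n M sigma C y) v then 0 else 1.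

(* P_e(C) = (1/M) sum_{v<M} Pr{ V^ <> v | V = v }
          = integral over R^n of (1/M) sum_v w(y|c_v) 1[dec(y) <> v] *)
Definition Pe_is (n M : nat) (sigma : R) (C : codebook) (p : R) : Prop :=
  has_integral n
    (fun y => / INR M * rsum M (fun v => w n sigma y (C v) * err_ind n M sigma C v y))
    p.

Definition sqnorm (n : nat) (x : vecR) : R := rsum n (fun i => x i ^ 2).

Definition F_e (n M : nat) (Ups : R) (C : codebook) : Prop :=
  forall i, (i < M)%nat -> sqnorm n (C i) = INR n * Ups.
Definition F_m (n M : nat) (Ups : R) (C : codebook) : Prop :=
  forall i, (i < M)%nat -> sqnorm n (C i) <= INR n * Ups.
Definition F_a (n M : nat) (Ups : R) (C : codebook) : Prop :=
  / INR M * rsum M (fun i => sqnorm n (C i)) <= INR n * Ups.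

Definition is_glb (A : R -> Prop) (e : R) : Prop :=
  (forall x, A x -> e <= x) /\ (forall b, (forall x, A x -> b <= x) -> b <= e).

(* eps_star F n M Ups sigma e  :<->  e = inf_{C in F(n,M,Ups)} P_e(C) *)
Definition eps_star (F : nat -> nat -> R -> codebook -> Prop)
  (n M : nat) (Ups sigma e : R) : Prop :=
  is_glb (fun p => exists C, F n M Ups C /\ Pe_is n M sigma C p) e.

(* Main.v *)
Require Import Defs.
From Stdlib Require Import Reals Lra Lia ZArith.
Open Scope R_scope.

Module MC.
From HB Require Import structures.
From mathcomp Require Import all_boot all_order all_algebra.
From mathcomp Require Import all_classical all_reals all_analysis.
From mathcomp Require Import Rstruct Rstruct_topology.
Import Order.TTheory GRing.Theory Num.Theory.
Import numFieldNormedType.Exports.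
Local Open Scope classical_set_scope.
Local Open Scope ring_scope.

Section Gen.
Context {RR : realType}.
Definition IntF (f : RR -> RR) (x : RR) : RR :=
  (\int[@lebesgue_measure RR]_(t in `[0, x]) f t)%R.

Lemma IntF_deriv1 (f : RR -> RR) : continuous f -> forall x : RR, 0 < x ->
  derivable (IntF f) x 1 /\ derive1 (IntF f) x = f x.
Proof.
move=> cf x x0.
apply: (@continuous_FTC1 RR f (BLeft 0) _ (x + 1) _ _ _ _).
- by rewrite ltrDl.
- apply: continuous_compact_integrable => //; first exact: segment_compact.
  by apply: continuous_subspaceT.
- by rewrite /=; rewrite lte_fin.
- exact: cf.
Qed.

Lemma IntF_cvg (f : RR -> RR) : continuous f -> forall x : RR, 0 < x ->
  (fun h => h^-1 * (IntF f (h + x) - IntF f x)) @ 0^' --> f x.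
Proof.
move=> cf x x0.
have [d e] := (@IntF_deriv1 f cf x x0).
rewrite -e derive1E.
move: d; rewrite /derivable /derive /=.
apply: cvg_trans; apply: near_eq_cvg; near=> h.
by rewrite /= -[h%:A]/(h * 1) mulr1.
Unshelve. all: by end_near. Qed.

Lemma IntF_bnd (f : RR -> RR) : continuous f -> (forall t, 0 <= f t <= 1) ->
  forall x : RR, 0 <= x -> 0 <= IntF f x <= x.
Proof.
move=> cf fb x x0; apply/andP; split.
  by apply: Rintegral_ge0 => t _; have /andP[] := fb t.
have intf : (@lebesgue_measure RR).-integrable `[0, x] (EFin \o f).
  apply: continuous_compact_integrable => //; first exact: segment_compact.
  by apply: continuous_subspaceT.
have E : \int[@lebesgue_measure RR]_(t in `[0, x]) (cst 1 t) = x.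
  rewrite Rintegral_cst//= lebesgue_measure_itv/=.
  case: ifPn => [_|]; first by rewrite /= subr0 mul1r.
  rewrite lte_fin -leNgt => x0'.
  have -> : x = 0 by apply/le_anti; rewrite x0 x0'.
  by rewrite mul1r.
rewrite -[X in _ <= X]E.
apply: le_Rintegral => //.
- apply: continuous_compact_integrable => //; first exact: segment_compact.
  by apply: continuous_subspaceT => z; exact: cvg_cst.
- by move=> t _; have /andP[] := fb t.
Qed.

Lemma gauss_sqr_lim :
  (IntF (@gauss_fun RR) x) ^+ 2 @[x --> +oo] --> pi / 4.
Proof. exact: gauss_integral_proof.cvg_integral0_gauss_sqr. Qed.

Lemma atan_IntF : IntF (fun t : RR => (oneDsqr t)^-1) 1 = pi / 4.
Proof. by rewrite /IntF integral0_oneDsqr// atan1. Qed.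
End Gen.

Section Concrete.
Local Notation RS := Rdefinitions.R.
Definition IntFR (f : RS -> RS) (x : RS) : RS := @IntF RS f x.

Lemma IntF_dpl (f : RS -> RS) : (forall x, continuity_pt f x) ->
  forall x, Rlt 0 x -> derivable_pt_lim (IntFR f) x (f x).
Proof.
move=> cf x /RltP x0.
have cf' : continuous f by move=> z; apply/continuity_pt_cvg.
have H := @IntF_cvg RS f cf' x x0.
pose g h := if h == 0 then f x else h^-1 * (IntF f (h + x) - IntF f x).
have cg : continuity_pt g 0.
  apply/continuity_pt_cvg'.
  have -> : g 0 = f x by rewrite /g eqxx.
  apply: cvg_trans H; apply: near_eq_cvg.
  near=> h; rewrite /g ifF //; apply/negbTE.
  by near: h; exact: nbhs_dnbhs_neq.
move=> eps Heps.
have [alp [Halp Hc]] := cg eps Heps.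
exists (mkposreal alp Halp) => h hn hl.
have := Hc h (conj (conj I (not_eq_sym hn)) _).
rewrite /R_dist /= /Rdist Rminus_0_r => /(_ hl).
rewrite /g ifF; last by apply/negbTE/eqP.
rewrite eqxx.
have -> : Rplus x h = h + x by rewrite addrC.
by rewrite /Rdiv Rmult_comm.
Unshelve. all: by end_near. Qed.

Lemma IntF_bndR (f : RS -> RS) : (forall x, continuity_pt f x) ->
  (forall t, Rle 0 (f t) /\ Rle (f t) 1) ->
  forall x, Rle 0 x -> Rle 0 (IntFR f x) /\ Rle (IntFR f x) x.
Proof.
move=> cf fb x /RleP x0.
have cf' : continuous f by move=> z; apply/continuity_pt_cvg.
have fb' : forall t, 0 <= f t <= 1.
  by move=> t; have [/RleP a /RleP b] := fb t; rewrite a b.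
by have /andP[/RleP a /RleP b] := @IntF_bnd RS f cf' fb' x x0.
Qed.

Definition gaussR (t : RS) : RS := exp (Ropp (Rmult t t)).
Definition invsqR (t : RS) : RS := Rinv (Rplus 1 (Rmult t t)).
Definition pimc : RS := pi.

Lemma gaussR_E : gaussR = @gauss_fun RS.
Proof.
apply: funext => t; rewrite /gaussR /gauss_fun RexpE expr2 //.
Qed.

Lemma invsqR_E : invsqR = (fun t : RS => (oneDsqr t)^-1).
Proof. by apply: funext => t; rewrite /invsqR /oneDsqr expr2. Qed.

Lemma L4 : IntFR invsqR R1 = Rdiv pimc 4.
Proof.
rewrite /IntFR invsqR_E atan_IntF /pimc /Rdiv.
congr (_ * _); congr (Rinv _).
by rewrite IZRposE INRE.
Qed.

Lemma L3 : forall eps, Rlt 0 eps -> exists X, forall x, Rlt X x ->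
  Rlt (Rabs (Rminus (pow (IntFR gaussR x) 2) (Rdiv pimc 4))) eps.
Proof.
move=> eps /RltP e0.
have := gauss_sqr_lim (RR := RS).
move/cvgrPdist_lt => /(_ eps e0) [M [_ HM]].
exists M => x /RltP xM.
have := HM x xM.
have E4 : Rdiv pimc 4 = pi / 4 by rewrite -L4 /IntFR invsqR_E atan_IntF.
rewrite /IntFR gaussR_E E4 RpowE.
by move=> /RltP; rewrite distrC.
Qed.
End Concrete.

End MC.

From Coquelicot Require Import Coquelicot.
Open Scope R_scope.

Lemma rsum_ext : forall N f g, (forall k, (k < N)%nat -> f k = g k) -> rsum N f = rsum N g.
Proof. induction N; intros f g H; simpl; auto. rewrite (IHN f g); [rewrite (H N)|]; auto; intros; apply H; lia. Qed.

Lemma rprod_ext : forall N f g, (forall k, (k < N)%nat -> f k = g k) -> rprod N f = rprod N g.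
Proof. induction N; intros f g H; simpl; auto. rewrite (IHN f g); [rewrite (H N)|]; auto; intros; apply H; lia. Qed.

Lemma rsum_plus : forall N f g, rsum N (fun k => f k + g k) = rsum N f + rsum N g.
Proof. induction N; intros; simpl; [lra|]. rewrite IHN; lra. Qed.

Lemma rsum_minus : forall N f g, rsum N (fun k => f k - g k) = rsum N f - rsum N g.
Proof. induction N; intros; simpl; [lra|]. rewrite IHN; lra. Qed.

Lemma rsum_scal_r : forall N f c, rsum N f * c = rsum N (fun k => f k * c).
Proof. induction N; intros; simpl; [lra|]. rewrite <- IHN; lra. Qed.

Lemma rsum_scal_l : forall N f c, c * rsum N f = rsum N (fun k => c * f k).
Proof. induction N; intros; simpl; [lra|]. rewrite <- IHN; lra. Qed.

Lemma rsum_le : forall N f g, (forall k, (k < N)%nat -> f k <= g k) -> rsum N f <= rsum N g.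
Proof. induction N; intros f g H; simpl; [lra|]. assert (f N <= g N) by (apply H; lia).
  assert (rsum N f <= rsum N g) by (apply IHN; intros; apply H; lia). lra. Qed.

Lemma rsum_nonneg : forall N f, (forall k, (k < N)%nat -> 0 <= f k) -> 0 <= rsum N f.
Proof. intros. replace 0 with (rsum N (fun _ => 0)). apply rsum_le; auto.
  induction N; simpl; auto. rewrite IHN; [lra|]. intros; apply H; lia. Qed.

Lemma rsum_const : forall N c, rsum N (fun _ => c) = INR N * c.
Proof. induction N; intros; simpl rsum; [simpl; lra|]. rewrite IHN, S_INR; lra. Qed.

Lemma rsum_abs : forall N f, Rabs (rsum N f) <= rsum N (fun k => Rabs (f k)).
Proof. induction N; intros; simpl. rewrite Rabs_R0; lra.
  eapply Rle_trans. apply Rabs_triang. specialize (IHN f). lra. Qed.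

Lemma rsum_elem : forall N f u, (u < N)%nat -> (forall k, (k < N)%nat -> 0 <= f k) -> f u <= rsum N f.
Proof. induction N; intros f u Hu H; [lia|]. simpl.
  destruct (Nat.eq_dec u N).
  - subst. assert (0 <= rsum N f) by (apply rsum_nonneg; intros; apply H; lia). lra.
  - assert (f u <= rsum N f) by (apply IHN; [lia|intros; apply H; lia]).
    assert (0 <= f N) by (apply H; lia). lra. Qed.

Lemma rsum_swap : forall N K (F : nat -> nat -> R),
  rsum N (fun k => rsum K (fun j => F k j)) = rsum K (fun j => rsum N (fun k => F k j)).
Proof. induction N; intros; simpl. induction K; simpl; auto; lra.
  rewrite IHN. rewrite <- rsum_plus. reflexivity. Qed.

Lemma rprod_nonneg : forall N f, (forall k, (k < N)%nat -> 0 <= f k) -> 0 <= rprod N f.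
Proof. induction N; intros; simpl; [lra|]. apply Rmult_le_pos; [apply IHN|apply H]; intros; try apply H; lia. Qed.

Definition upd (y : vecR) (d : nat) (t : R) : vecR := fun i => if Nat.eqb i d then t else y i.
Definition gx (N : nat) (T : R) (k : nat) : R := - T + INR k * (2 * T / INR N).

Lemma grid_sum_S : forall d N T f,
  grid_sum (S d) N T f = rsum N (fun k => grid_sum d N T (fun y => f (upd y d (gx N T k)))).
Proof. reflexivity. Qed.

Lemma grid_sum_ext : forall d N T f g, (forall y, f y = g y) -> grid_sum d N T f = grid_sum d N T g.
Proof. induction d; intros N T f g H; simpl; auto. apply rsum_ext; intros. apply IHd; intros; apply H. Qed.

Lemma grid_sum_le : forall d N T f g, (forall y, f y <= g y) -> grid_sum d N T f <= grid_sum d N T g.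
Proof. induction d; intros N T f g H; simpl; auto. apply rsum_le; intros. apply IHd; intros; apply H. Qed.

Lemma grid_sum_plus : forall d N T f g,
  grid_sum d N T (fun y => f y + g y) = grid_sum d N T f + grid_sum d N T g.
Proof. induction d; intros; simpl; auto. rewrite <- rsum_plus. apply rsum_ext; intros. apply IHd. Qed.

Lemma grid_sum_scal : forall d N T f c,
  grid_sum d N T (fun y => c * f y) = c * grid_sum d N T f.
Proof. induction d; intros; simpl; auto. rewrite rsum_scal_l. apply rsum_ext; intros. apply IHd. Qed.

Lemma grid_sum_minus : forall d N T f g,
  grid_sum d N T (fun y => f y - g y) = grid_sum d N T f - grid_sum d N T g.
Proof. intros. unfold Rminus. rewrite grid_sum_plus.
  rewrite (grid_sum_ext d N T (fun y => - g y) (fun y => -1 * g y)) by (intros; ring).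
  rewrite grid_sum_scal; ring. Qed.

Lemma grid_sum_rsum : forall d N T K (F : nat -> vecR -> R),
  grid_sum d N T (fun y => rsum K (fun j => F j y)) = rsum K (fun j => grid_sum d N T (F j)).
Proof. induction K; intros; simpl.
  - replace (grid_sum d N T (fun _ => 0)) with (grid_sum d N T (fun y => 0 * 0)) by (apply grid_sum_ext; intros; ring).
    rewrite grid_sum_scal; ring.
  - rewrite grid_sum_plus. rewrite IHK. reflexivity. Qed.

Lemma grid_sum_nonneg : forall d N T f, (forall y, 0 <= f y) -> 0 <= grid_sum d N T f.
Proof. induction d; intros; simpl; auto. apply rsum_nonneg; intros; apply IHd; auto. Qed.

Lemma grid_sum_prod : forall d N T (g : nat -> R -> R),
  grid_sum d N T (fun y => rprod d (fun i => g i (y i))) =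
  rprod d (fun i => rsum N (fun k => g i (gx N T k))).
Proof. induction d; intros; simpl; auto.
  rewrite rsum_scal_l.
  apply rsum_ext; intros k Hk.
  rewrite (grid_sum_ext d N T _ (fun y => g d (gx N T k) * rprod d (fun i => g i (y i)))).
  - rewrite grid_sum_scal, IHd. ring.
  - intros y. unfold upd. rewrite Nat.eqb_refl. rewrite Rmult_comm. f_equal.
    apply rprod_ext. intros i Hi. destruct (Nat.eqb_spec i d); [lia|auto]. Qed.

Lemma riemann_box_S : forall d N T f,
  riemann_box (S d) N T f =
  rsum N (fun k => riemann_box d N T (fun y => f (upd y d (gx N T k))) * (2 * T / INR N)).
Proof. intros. unfold riemann_box. rewrite grid_sum_S. simpl pow.
  rewrite rsum_scal_r. apply rsum_ext; intros. ring. Qed.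


Definition InBox (d : nat) (T : R) (y : vecR) : Prop := forall i, (i < d)%nat -> Rabs (y i) <= T.

Definition LipB (d : nat) (T L : R) (f : vecR -> R) : Prop :=
  forall y z, InBox d T y -> InBox d T z -> (forall i, (d <= i)%nat -> y i = z i) ->
    Rabs (f y - f z) <= L * rsum d (fun i => Rabs (y i - z i)).

Definition clampT (T t : R) : R := Rmax (- T) (Rmin T t).

Lemma clamp_bound : forall T t, 0 <= T -> Rabs (clampT T t) <= T.
Proof. intros. unfold clampT. unfold Rmax, Rmin.
  destruct (Rle_dec T t); destruct (Rle_dec (-T) _); apply Rabs_le; lra. Qed.

Lemma clamp_id : forall T t, -T <= t <= T -> clampT T t = t.
Proof. intros. unfold clampT, Rmax, Rmin. destruct (Rle_dec T t); destruct (Rle_dec (-T) _); lra. Qed.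

Lemma clamp_lip : forall T t s, 0 <= T -> Rabs (clampT T t - clampT T s) <= Rabs (t - s).
Proof. intros. unfold clampT, Rmax, Rmin.
  destruct (Rle_dec T t); destruct (Rle_dec T s); destruct (Rle_dec (-T) T);
  destruct (Rle_dec (-T) t); destruct (Rle_dec (-T) s);
  repeat match goal with |- context [Rle_dec ?a ?b] => destruct (Rle_dec a b) end;
  apply Rabs_le; split; try (apply Rabs_le_between; lra);
  destruct (Rabs_le_between (t - s) (Rabs (t-s))) as [A B]; try lra;
  (try (pose proof (Rle_abs (t - s)); pose proof (Rle_abs (-(t-s))); rewrite Rabs_Ropp in *; lra)). Qed.

Fixpoint Iint (d : nat) (T : R) (f : vecR -> R) : R :=
  match d with
  | O => f (fun _ => 0)
  | S d' => RInt (fun t => Iint d' T (fun y => f (upd y d' (clampT T t)))) (- T) T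
  end.

Lemma lip_cont : forall (G : R -> R) K, (forall t s, Rabs (G t - G s) <= K * Rabs (t - s)) ->
  forall x, continuous G x.
Proof. intros G K H x. apply continuity_pt_filterlim.
  intros eps Heps. exists (eps / (Rabs K + 1)). split.
  - apply Rdiv_lt_0_compat; [lra|]. pose proof (Rabs_pos K); lra.
  - intros y [_ Hy]. unfold R_dist in *. simpl in *. unfold R_dist in *.
    eapply Rle_lt_trans. apply H.
    pose proof (Rabs_pos K). pose proof (Rabs_pos (y - x)).
    apply Rle_lt_trans with ((Rabs K + 1) * Rabs (y - x)).
    + pose proof (Rle_abs K). nra.
    + apply Rmult_lt_compat_l with (r := Rabs K + 1) in Hy; [|lra].
      replace ((Rabs K + 1) * (eps / (Rabs K + 1))) with eps in Hy by (field; lra). lra. Qed.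

Lemma lip_exRInt : forall (G : R -> R) K a b, (forall t s, Rabs (G t - G s) <= K * Rabs (t - s)) ->
  ex_RInt G a b.
Proof. intros. apply (ex_RInt_continuous (V:=R_CompleteNormedModule)). intros. eapply lip_cont; eauto. Qed.

Lemma upd_box : forall d T y t, InBox d T y -> Rabs t <= T -> InBox (S d) T (upd y d t).
Proof. intros d T y t Hy Ht i Hi. unfold upd. destruct (Nat.eqb_spec i d); auto. apply Hy; lia. Qed.

Lemma rsum_upd : forall d y z t,
  rsum (S d) (fun i => Rabs (upd y d t i - upd z d t i)) = rsum d (fun i => Rabs (y i - z i)).
Proof. intros. cbn [rsum]. unfold upd. rewrite Nat.eqb_refl. unfold Rminus at 2. rewrite Rplus_opp_r, Rabs_R0, Rplus_0_r.
  apply rsum_ext. intros. destruct (Nat.eqb_spec k d); [lia|auto]. Qed.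

Lemma LipB_sect : forall d T L f t, LipB (S d) T L f -> Rabs t <= T ->
  LipB d T L (fun y => f (upd y d t)).
Proof. intros d T L f t H Ht y z Hy Hz Heq.
  rewrite <- rsum_upd with (t := t). apply H; try apply upd_box; auto.
  intros i Hi. unfold upd. destruct (Nat.eqb_spec i d); auto. apply Heq; lia. Qed.

Lemma LipB_sect2 : forall d T L f y t s, LipB (S d) T L f -> InBox d T y -> Rabs t <= T -> Rabs s <= T ->
  Rabs (f (upd y d t) - f (upd y d s)) <= L * Rabs (t - s).
Proof. intros. eapply Rle_trans. apply H; try apply upd_box; auto.
  intros i Hi. unfold upd. destruct (Nat.eqb_spec i d); [lia|auto].
  cbn [rsum]. unfold upd. rewrite Nat.eqb_refl.
  rewrite (rsum_ext d _ (fun _ => 0)). rewrite rsum_const. right; ring.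
  intros k Hk. destruct (Nat.eqb_spec k d); [lia|]. unfold Rminus. rewrite Rplus_opp_r; apply Rabs_R0. Qed.


Definition SupB (d : nat) (T eta : R) (f g : vecR -> R) : Prop :=
  forall y, InBox d T y -> Rabs (f y - g y) <= eta.

Definition I1stmt (d : nat) : Prop := forall T L eta f g, 0 <= T -> 0 <= L ->
  LipB d T L f -> LipB d T L g -> SupB d T eta f g ->
  Rabs (Iint d T f - Iint d T g) <= (2 * T) ^ d * eta.

Lemma I2_of_I1 : forall d, I1stmt d -> forall T L f, 0 <= T -> 0 <= L -> LipB (S d) T L f ->
  forall t s, Rabs (Iint d T (fun y => f (upd y d (clampT T t))) - Iint d T (fun y => f (upd y d (clampT T s))))
    <= ((2 * T) ^ d * L) * Rabs (t - s).
Proof. intros d H1 T L f HT HL Hf t s.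
  eapply Rle_trans. apply (H1 T L); auto; try apply LipB_sect; auto; try apply clamp_bound; auto.
  - intros y Hy. apply LipB_sect2 with (T:=T) (L:=L); [exact Hf|exact Hy|apply clamp_bound; auto|apply clamp_bound; auto].
  - rewrite Rmult_assoc. apply Rmult_le_compat_l. apply pow_le; lra.
    apply Rmult_le_compat_l; auto. apply clamp_lip; auto. Qed.

Lemma I1_all : forall d, I1stmt d.
Proof. induction d; intros T L eta f g HT HL Hf Hg Hs.
  - simpl. rewrite Rmult_1_l. apply Hs. intros i Hi; lia.
  - simpl Iint.
    pose proof (I2_of_I1 d IHd T L f HT HL Hf) as Gf.
    pose proof (I2_of_I1 d IHd T L g HT HL Hg) as Gg.
    assert (Ef := lip_exRInt _ _ (-T) T Gf). assert (Eg := lip_exRInt _ _ (-T) T Gg).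
    pose proof (RInt_minus _ _ _ _ Ef Eg) as E. unfold minus, plus, opp in E; simpl in E.
    replace (RInt (fun t : R => Iint d T (fun y : vecR => f (upd y d (clampT T t)))) (- T) T -
      RInt (fun t : R => Iint d T (fun y : vecR => g (upd y d (clampT T t)))) (- T) T) with
      (RInt (fun x : R => Iint d T (fun y : vecR => f (upd y d (clampT T x))) +
          - Iint d T (fun y : vecR => g (upd y d (clampT T x)))) (- T) T) by (rewrite E; reflexivity).
    eapply Rle_trans. apply abs_RInt_le_const with (M := (2 * T) ^ d * eta). lra.
    + exact (ex_RInt_minus (V:=R_NormedModule) _ _ _ _ Ef Eg).
    + intros t _. apply (IHd T L); auto; try apply LipB_sect; auto; try apply clamp_bound; auto.
      intros y Hy. apply Hs. apply upd_box; auto. apply clamp_bound; auto.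
    + simpl. right; ring. Qed.

Lemma riemann_left : forall (G : R -> R) K a h, 0 <= h -> 0 <= K ->
  (forall t s, Rabs (G t - G s) <= K * Rabs (t - s)) ->
  forall j, Rabs (rsum j (fun k => h * G (a + INR k * h)) - RInt G a (a + INR j * h)) <= INR j * K * h * h.
Proof. intros G K a h Hh HK HG. induction j.
  - simpl. rewrite Rmult_0_l, Rplus_0_r, RInt_point. unfold zero; simpl. rewrite Rminus_0_r, Rabs_R0. lra.
  - cbn [rsum]. set (x := a + INR j * h).
    assert (Ex : a + INR (S j) * h = x + h) by (unfold x; rewrite S_INR; ring).
    rewrite Ex.
    rewrite <- (RInt_Chasles G a x (x + h)) by (eapply lip_exRInt; eauto).
    unfold plus; simpl.
    assert (Hc : Rabs (h * G x - RInt G x (x + h)) <= K * h * h).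
    { assert (E1 : RInt (fun _ => G x) x (x + h) = h * G x).
      { rewrite RInt_const. unfold scal; simpl. unfold mult; simpl. ring. }
      assert (E2 : RInt (fun t => G t - G x) x (x + h) = RInt G x (x + h) - h * G x).
      { rewrite <- E1. pose proof (RInt_minus (V:=R_CompleteNormedModule) G (fun _ => G x) x (x+h)) as E.
        unfold minus, plus, opp in E; simpl in E. unfold Rminus. rewrite <- E. reflexivity.
        eapply lip_exRInt; eauto. apply (ex_RInt_const (V:=R_CompleteNormedModule)). }
      replace (h * G x - RInt G x (x + h)) with (- RInt (fun t => G t - G x) x (x + h)) by (rewrite E2; ring).
      rewrite Rabs_Ropp.
      eapply Rle_trans. apply abs_RInt_le_const with (M := K * h). lra.
      + apply (ex_RInt_minus (V:=R_CompleteNormedModule)). eapply lip_exRInt; eauto. apply (ex_RInt_const (V:=R_CompleteNormedModule)).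
      + intros t Ht. eapply Rle_trans. apply HG. apply Rmult_le_compat_l; auto. rewrite Rabs_right; lra.
      + right; ring. }
    try rewrite S_INR.
    replace (rsum j (fun k : nat => h * G (a + INR k * h)) + h * G x - (RInt G a x + RInt G x (x + h)))
      with ((rsum j (fun k : nat => h * G (a + INR k * h)) - RInt G a x) + (h * G x - RInt G x (x + h))) by ring.
    eapply Rle_trans. apply Rabs_triang. fold x in IHj. change (match j with 0%nat => 1 | S _ => INR j + 1 end) with (INR (S j)). rewrite S_INR. lra. Qed.

Lemma gx_box : forall N T k, 0 <= T -> (k < N)%nat -> Rabs (gx N T k) <= T.
Proof. intros. unfold gx. assert (0 < INR N) by (apply lt_0_INR; lia).
  assert (INR k <= INR N) by (apply le_INR; lia). assert (0 <= INR k) by apply pos_INR.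
  assert (0 <= INR k * (2 * T / INR N) <= 2 * T).
  { split. apply Rmult_le_pos; auto. unfold Rdiv; apply Rmult_le_pos; [lra|left; apply Rinv_0_lt_compat; auto].
    replace (2 * T) with (INR N * (2 * T / INR N)) at 2 by (field; lra).
    apply Rmult_le_compat_r; auto. unfold Rdiv; apply Rmult_le_pos; [lra|left; apply Rinv_0_lt_compat; auto]. }
  apply Rabs_le; lra. Qed.

Lemma conv_bound : forall d T L N f, 0 <= T -> 0 <= L -> (0 < N)%nat -> LipB d T L f ->
  Rabs (riemann_box d N T f - Iint d T f) <= INR d * L * (2 * T) ^ d * (2 * T / INR N).
Proof. induction d; intros T L N f HT HL HN Hf.
  - unfold riemann_box. simpl. rewrite Rmult_1_r, Rminus_eq_0, Rabs_R0. lra.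
  - assert (HNp : 0 < INR N) by (apply lt_0_INR; lia).
    set (h := 2 * T / INR N).
    assert (Hh : 0 <= h) by (unfold h, Rdiv; apply Rmult_le_pos; [lra|left; apply Rinv_0_lt_compat; auto]).
    rewrite riemann_box_S. simpl Iint. fold h.
    set (G := fun t => Iint d T (fun y => f (upd y d (clampT T t)))).
    pose proof (I2_of_I1 d (I1_all d) T L f HT HL Hf) as HG. fold G in HG.
    assert (HK : 0 <= (2 * T) ^ d * L) by (apply Rmult_le_pos; auto; apply pow_le; lra).
    pose proof (riemann_left G _ (-T) h Hh HK HG N) as RL.
    assert (EN : - T + INR N * h = T) by (unfold h; field; lra).
    rewrite EN in RL.
    assert (Hsum : Rabs (rsum N (fun k => riemann_box d N T (fun y => f (upd y d (gx N T k))) * h)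
                    - rsum N (fun k => h * G (- T + INR k * h))) <= INR N * h * (INR d * L * (2 * T) ^ d * h)).
    { rewrite <- rsum_minus. eapply Rle_trans. apply rsum_abs.
      eapply Rle_trans. apply rsum_le with (g := fun _ => h * (INR d * L * (2 * T) ^ d * h)).
      - intros k Hk. 
        assert (Eg : G (-T + INR k * h) = Iint d T (fun y => f (upd y d (gx N T k)))).
        { unfold G. rewrite clamp_id. reflexivity. pose proof (gx_box N T k HT Hk) as B. unfold gx in B. fold h in B.
          apply Rabs_le_between in B. lra. }
        rewrite Eg.
        replace (riemann_box d N T (fun y : vecR => f (upd y d (gx N T k))) * h - h * Iint d T (fun y : vecR => f (upd y d (gx N T k))))
          with (h * (riemann_box d N T (fun y : vecR => f (upd y d (gx N T k))) - Iint d T (fun y : vecR => f (upd y d (gx N T k))))) by ring.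
        rewrite Rabs_mult, (Rabs_right h) by lra. apply Rmult_le_compat_l; auto.
        apply IHd; auto. apply LipB_sect; auto. apply gx_box; auto.
      - rewrite rsum_const. right; ring. }
    replace (rsum N (fun k => riemann_box d N T (fun y => f (upd y d (gx N T k))) * h) - RInt G (- T) T)
      with ((rsum N (fun k => riemann_box d N T (fun y => f (upd y d (gx N T k))) * h) - rsum N (fun k => h * G (- T + INR k * h)))
            + (rsum N (fun k => h * G (- T + INR k * h)) - RInt G (- T) T)) by ring.
    eapply Rle_trans. apply Rabs_triang.
    assert (ENh : INR N * h = 2 * T) by (unfold h; field; lra).
    rewrite S_INR. simpl pow.
    replace (INR N * ((2 * T) ^ d * L) * h * h) with ((INR N * h) * ((2 * T) ^ d * L) * h) in RL by ring.
    replace (INR N * h * (INR d * L * (2 * T) ^ d * h)) with ((INR N * h) * (INR d * L * (2 * T) ^ d * h)) in Hsum by ring.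
    rewrite ENh in RL, Hsum. lra. Qed.

Lemma cv_inv_S : forall c, Un_cv (fun N => c / INR (S N)) 0.
Proof. intros c eps He. destruct (archimed (Rabs c / eps)) as [H1 _].
  assert (0 <= Rabs c / eps) by (apply Rmult_le_pos; [apply Rabs_pos|left; apply Rinv_0_lt_compat; auto]).
  assert (0 < up (Rabs c / eps))%Z by (apply lt_IZR; simpl; lra).
  exists (Z.to_nat (up (Rabs c / eps))). intros n Hn. unfold R_dist. rewrite Rminus_0_r.
  assert (HS : 0 < INR (S n)) by (apply lt_0_INR; lia).
  assert (IZR (up (Rabs c / eps)) <= INR n).
  { rewrite <- (Z2Nat.id (up (Rabs c / eps))) by lia. rewrite <- INR_IZR_INZ. apply le_INR; lia. }
  rewrite S_INR in *. unfold Rdiv. rewrite Rabs_mult, Rabs_inv, (Rabs_right (INR n + 1)) by lra.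
  apply Rmult_lt_reg_r with (INR n + 1); [lra|]. rewrite Rmult_assoc, Rinv_l, Rmult_1_r by lra.
  assert (Rabs c = Rabs c / eps * eps) by (field; lra). nra. Qed.

Lemma conv_cv : forall d T L f, 0 <= T -> 0 <= L -> LipB d T L f ->
  Un_cv (fun N => riemann_box d (S N) T f) (Iint d T f).
Proof. intros d T L f HT HL Hf eps He.
  destruct (cv_inv_S (INR d * L * (2 * T) ^ d * (2 * T)) eps He) as [N0 HN0].
  exists N0. intros n Hn. unfold R_dist. eapply Rle_lt_trans. apply conv_bound with (L := L); auto; lia.
  specialize (HN0 n Hn). unfold R_dist in HN0. rewrite Rminus_0_r in HN0.
  eapply Rle_lt_trans; [|exact HN0]. rewrite Rabs_right. right; unfold Rdiv; ring.
  apply Rle_ge. assert (0 < INR (S n)) by (apply lt_0_INR; lia).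
  apply Rmult_le_pos. apply Rmult_le_pos. apply Rmult_le_pos. apply Rmult_le_pos; auto. apply pos_INR. apply pow_le; lra. lra.
  left; apply Rinv_0_lt_compat; auto. Qed.

Lemma LipB_mono : forall d T T' L L' f, T <= T' -> L <= L' -> LipB d T' L f -> LipB d T L' f.
Proof. intros d T T' L L' f HT HL H y z Hy Hz He. eapply Rle_trans. apply H; auto.
  intros i Hi; specialize (Hy i Hi); lra. intros i Hi; specialize (Hz i Hi); lra.
  apply Rmult_le_compat_r; auto. apply rsum_nonneg; intros; apply Rabs_pos. Qed.

Lemma Iint_le : forall d T L f g, 0 <= T -> 0 <= L -> LipB d T L f -> LipB d T L g ->
  (forall y, InBox d T y -> f y <= g y) -> Iint d T f <= Iint d T g.
Proof. induction d; intros T L f g HT HL Hf Hg H.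
  - simpl. apply H. intros i Hi; lia.
  - simpl. apply RInt_le. lra.
    + eapply lip_exRInt. apply (I2_of_I1 d (I1_all d) T L f HT HL Hf).
    + eapply lip_exRInt. apply (I2_of_I1 d (I1_all d) T L g HT HL Hg).
    + intros t _. apply (IHd T L); auto; try (apply LipB_sect; auto; apply clamp_bound; auto).
      intros y Hy. apply H. apply upd_box; auto. apply clamp_bound; auto. Qed.

Lemma Iint_nonneg : forall d T L f, 0 <= T -> 0 <= L -> LipB d T L f ->
  (forall y, InBox d T y -> 0 <= f y) -> 0 <= Iint d T f.
Proof. induction d; intros T L f HT HL Hf H.
  - simpl. apply H. intros i Hi; lia.
  - simpl. apply RInt_ge_0. lra.
    + eapply lip_exRInt. apply (I2_of_I1 d (I1_all d) T L f HT HL Hf).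
    + intros t _. apply (IHd T L); auto; try (apply LipB_sect; auto; apply clamp_bound; auto).
      intros y Hy. apply H. apply upd_box; auto. apply clamp_bound; auto. Qed.

Lemma Iint_box_mono : forall d T T' L f, 0 <= T -> T <= T' -> 0 <= L -> LipB d T' L f ->
  (forall y, 0 <= f y) -> Iint d T f <= Iint d T' f.
Proof. induction d; intros T T' L f HT HTT HL Hf H.
  - simpl. lra.
  - simpl.
    assert (HfT : LipB (S d) T L f) by (eapply LipB_mono; [exact HTT| apply Rle_refl| exact Hf]).
    set (G1 := fun t => Iint d T (fun y => f (upd y d (clampT T t)))).
    set (G2 := fun t => Iint d T' (fun y => f (upd y d (clampT T' t)))).
    assert (E1 : ex_RInt G1 (-T) T) by (eapply lip_exRInt; apply (I2_of_I1 d (I1_all d) T L f HT HL HfT)).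
    assert (HG2 := I2_of_I1 d (I1_all d) T' L f ltac:(lra) HL Hf). fold G2 in HG2.
    assert (G2pos : forall t, 0 <= G2 t).
    { intros t. unfold G2. apply (Iint_nonneg d T' L); try lra; auto.
      apply LipB_sect; auto. apply clamp_bound; lra. }
    apply Rle_trans with (RInt G2 (-T) T).
    + apply RInt_le; auto. lra. eapply lip_exRInt; exact HG2.
      intros t Ht. unfold G1, G2. rewrite !clamp_id by lra.
      apply (IHd T T' L); auto. apply LipB_sect; auto. apply Rabs_le; lra.
    + rewrite <- (RInt_Chasles G2 (-T') (-T) T') by (eapply lip_exRInt; exact HG2).
      rewrite <- (RInt_Chasles G2 (-T) T T') by (eapply lip_exRInt; exact HG2).
      unfold plus; simpl.
      assert (0 <= RInt G2 (- T') (- T)) by (apply RInt_ge_0; [lra|eapply lip_exRInt; exact HG2|intros; auto]).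
      assert (0 <= RInt G2 T T') by (apply RInt_ge_0; [lra|eapply lip_exRInt; exact HG2|intros; auto]).
      lra. Qed.


Lemma L4' : MC.IntFR MC.invsqR 1 = MC.pimc / 4.
Proof. exact MC.L4. Qed.

Lemma gauss_cont : forall x, continuity_pt MC.gaussR x.
Proof. intros. unfold MC.gaussR. apply continuity_pt_comp with (f1 := fun t => - (t * t)).
  apply continuity_pt_opp. apply continuity_pt_mult; apply continuity_pt_id.
  apply derivable_continuous_pt. apply derivable_pt_exp. Qed.

Lemma invsq_cont : forall x, continuity_pt MC.invsqR x.
Proof. intros. unfold MC.invsqR. apply continuity_pt_inv.
  apply continuity_pt_plus. apply continuity_pt_const; intros ? ?; auto.
  apply continuity_pt_mult; apply continuity_pt_id. nra. Qed.

Lemma gauss_bnd : forall t, 0 <= MC.gaussR t <= 1.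
Proof. intros. unfold MC.gaussR. split. left; apply exp_pos.
  rewrite <- exp_0. destruct (Req_dec t 0). subst; right; f_equal; ring.
  left. apply exp_increasing. nra. Qed.

Lemma invsq_bnd : forall t, 0 <= MC.invsqR t <= 1.
Proof. intros. unfold MC.invsqR. split. left; apply Rinv_0_lt_compat; nra.
  rewrite <- Rinv_1. apply Rinv_le_contravar; nra. Qed.

Lemma IntF_RInt : forall f, (forall x, continuity_pt f x) -> (forall t, 0 <= f t <= 1) ->
  forall x, 0 <= x -> MC.IntFR f x = RInt f 0 x.
Proof. intros f Hc Hb x Hx.
  assert (Hcont : forall z, continuous f z) by (intros; apply continuity_pt_filterlim; auto).
  assert (Hex : forall a b, ex_RInt f a b) by (intros; apply (ex_RInt_continuous (V:=R_CompleteNormedModule)); intros; auto).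
  destruct (Req_dec x 0) as [Hx0|Hx0].
  { subst. rewrite RInt_point. destruct (MC.IntF_bndR f Hc Hb 0 (Rle_refl 0)). unfold zero; simpl; lra. }
  assert (Key : forall a, 0 < a < x -> Rabs (MC.IntFR f x - RInt f 0 x) <= 2 * a).
  { intros a Ha.
    assert (E : RInt f a x = MC.IntFR f x - MC.IntFR f a).
    { apply is_RInt_unique. apply (is_RInt_derive (V:=R_CompleteNormedModule) (MC.IntFR f) f).
      - intros z Hz. apply is_derive_Reals. apply MC.IntF_dpl; auto.
        rewrite Rmin_left in Hz by lra. lra.
      - intros; auto. }
    rewrite <- (RInt_Chasles f 0 a x) by auto. unfold plus; simpl. rewrite E.
    assert (B1 : Rabs (RInt f 0 a) <= (a - 0) * 1).
    { apply abs_RInt_le_const; auto. lra. intros t _. destruct (Hb t). rewrite Rabs_right; lra. }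
    destruct (MC.IntF_bndR f Hc Hb a ltac:(lra)).
    replace (MC.IntFR f x - (RInt f 0 a + (MC.IntFR f x - MC.IntFR f a))) with (- (RInt f 0 a) + MC.IntFR f a) by ring.
    eapply Rle_trans. apply Rabs_triang. rewrite Rabs_Ropp, (Rabs_right (MC.IntFR f a)) by lra. lra. }
  destruct (Req_dec (MC.IntFR f x - RInt f 0 x) 0). lra.
  set (dlt := Rabs (MC.IntFR f x - RInt f 0 x)).
  assert (0 < dlt) by (apply Rabs_pos_lt; auto).
  specialize (Key (Rmin (x / 2) (dlt / 4))).
  assert (0 < Rmin (x/2) (dlt/4)) by (apply Rmin_pos; lra).
  assert (Rmin (x/2) (dlt/4) <= dlt / 4) by apply Rmin_r.
  assert (Rmin (x/2) (dlt/4) <= x / 2) by apply Rmin_l.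
  assert (dlt <= 2 * Rmin (x/2) (dlt/4)) by (apply Key; lra). lra. Qed.

Lemma pimc_PI : MC.pimc = PI.
Proof.
  assert (E1 : RInt MC.invsqR 0 1 = atan 1 - atan 0).
  { apply is_RInt_unique. apply (is_RInt_derive (V:=R_CompleteNormedModule) atan MC.invsqR).
    - intros z _. apply is_derive_Reals. unfold MC.invsqR.
      replace (z * z) with (z ^ 2) by ring. apply derivable_pt_lim_atan.
    - intros z _. apply continuity_pt_filterlim. apply invsq_cont. }
  rewrite atan_1, atan_0 in E1.
  rewrite <- IntF_RInt in E1; auto using invsq_cont, invsq_bnd; try lra.
  rewrite L4' in E1. lra. Qed.

Definition g := MC.gaussR.
Lemma g_ex : forall a b, ex_RInt g a b.
Proof. intros; apply (ex_RInt_continuous (V:=R_CompleteNormedModule)); intros; apply continuity_pt_filterlim; apply gauss_cont. Qed.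

Lemma gauss_half : forall eps, 0 < eps -> exists X, 0 <= X /\ forall x, X < x -> Rabs (RInt g 0 x - sqrt PI / 2) < eps.
Proof. intros eps He.
  set (s := sqrt PI / 2).
  assert (Hs : 0 < s) by (unfold s; pose proof (sqrt_lt_R0 PI PI_RGT_0); lra).
  assert (Hs2 : s * s = PI / 4) by (unfold s; replace (sqrt PI / 2 * (sqrt PI / 2)) with (sqrt PI * sqrt PI / 4) by field;
     rewrite sqrt_sqrt; [lra| pose proof PI_RGT_0; lra]).
  destruct (MC.L3 (eps * s) ltac:(nra)) as [X HX].
  exists (Rmax X 0). split. apply Rmax_r. intros x Hx.
  assert (x0 : 0 <= x) by (pose proof (Rmax_r X 0); lra).
  specialize (HX x ltac:(pose proof (Rmax_l X 0); lra)).
  rewrite IntF_RInt in HX; auto using gauss_cont, gauss_bnd. rewrite pimc_PI in HX. fold g in HX.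
  set (E := RInt g 0 x) in *.
  assert (E0 : 0 <= E). { unfold E. apply RInt_ge_0; auto. apply g_ex. intros; apply gauss_bnd. }
  rewrite <- Hs2 in HX. replace (E ^ 2 - s * s) with ((E - s) * (E + s)) in HX by ring.
  rewrite Rabs_mult, (Rabs_right (E + s)) in HX by lra.
  assert (Rabs (E - s) * s <= Rabs (E - s) * (E + s)) by (apply Rmult_le_compat_l; [apply Rabs_pos|lra]).
  apply Rmult_lt_reg_r with s; auto. lra. Qed.

Lemma g_even : forall a, RInt g a 0 = RInt g 0 (- a).
Proof. intros.
  pose proof (RInt_comp_lin (V:=R_CompleteNormedModule) g (-1) 0 a 0 (g_ex _ _)) as E.
  rewrite (RInt_ext _ (fun y => opp (g y))) in E.
  - rewrite (RInt_opp (V:=R_CompleteNormedModule)) in E by apply g_ex. unfold opp in E; simpl in E.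
    replace (-1 * a + 0) with (-a) in E by ring. replace (-1 * 0 + 0) with 0 in E by ring.
    pose proof (opp_RInt_swap (V:=R_CompleteNormedModule) g (-a) 0 (g_ex _ _)) as E2. unfold opp in E2; simpl in E2. lra.
  - intros. unfold scal; simpl; unfold mult; simpl. unfold opp; simpl. unfold g, MC.gaussR.
    replace (-1 * x + 0) with (-x) by ring. replace (- x * - x) with (x * x) by ring. ring. Qed.

Lemma gauss_full : forall eps, 0 < eps -> exists X, 0 <= X /\ forall a b, a < - X -> X < b ->
  Rabs (RInt g a b - sqrt PI) < eps.
Proof. intros eps He. destruct (gauss_half (eps/2) ltac:(lra)) as [X [X0 HX]].
  exists X. split; auto. intros a b Ha Hb.
  rewrite <- (RInt_Chasles g a 0 b) by apply g_ex. unfold plus; simpl. rewrite g_even.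
  pose proof (HX (-a) ltac:(lra)). pose proof (HX b Hb).
  replace (RInt g 0 (- a) + RInt g 0 b - sqrt PI) with ((RInt g 0 (- a) - sqrt PI / 2) + (RInt g 0 b - sqrt PI / 2)) by field.
  eapply Rle_lt_trans. apply Rabs_triang. lra. Qed.

Definition c0 (sigma : R) := / (sqrt (2 * PI) * sigma).

Lemma c0_pos : forall sigma, 0 < sigma -> 0 < c0 sigma.
Proof. intros. unfold c0. apply Rinv_0_lt_compat. apply Rmult_lt_0_compat; auto.
  apply sqrt_lt_R0. pose proof PI_RGT_0; lra. Qed.

Lemma phi_bnd : forall mu sigma y, 0 < sigma -> 0 <= phi mu sigma y <= c0 sigma.
Proof. intros. unfold phi. fold (c0 sigma). pose proof (c0_pos sigma H). split.
  apply Rmult_le_pos; [lra|left; apply exp_pos].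
  rewrite <- (Rmult_1_r (c0 sigma)) at 2. apply Rmult_le_compat_l; [lra|].
  rewrite <- exp_0. assert (0 <= (y - mu) ^ 2 / (2 * sigma ^ 2)).
  { apply Rmult_le_pos. apply pow2_ge_0. left; apply Rinv_0_lt_compat; nra. }
  destruct (Req_dec ((y - mu) ^ 2 / (2 * sigma ^ 2)) 0).
  - right. f_equal. unfold Rdiv in *. lra.
  - left. apply exp_increasing. unfold Rdiv in *. lra. Qed.

Lemma exp_neg_lip : forall A B, 0 <= A -> 0 <= B -> Rabs (exp (- A) - exp (- B)) <= Rabs (A - B).
Proof. assert (W : forall A B, 0 <= A <= B -> Rabs (exp (- A) - exp (- B)) <= Rabs (A - B)).
  { intros A B [HA HAB]. rewrite Rabs_right. rewrite Rabs_left1 by lra.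
    replace (exp (-B)) with (exp (-A) * exp (A - B)) by (rewrite <- exp_plus; f_equal; ring).
    pose proof (exp_ineq1_le (A - B)). assert (exp (-A) <= 1).
    { rewrite <- exp_0. destruct (Req_dec A 0). subst. rewrite Ropp_0; lra. left; apply exp_increasing; lra. }
    pose proof (exp_pos (-A)). nra.
    apply Rle_ge. assert (exp (-B) <= exp (-A)). { destruct (Req_dec A B). subst; lra. left; apply exp_increasing; lra. } lra. }
  intros A B HA HB. destruct (Rle_dec A B). apply W; lra.
  rewrite Rabs_minus_sym, (Rabs_minus_sym A). apply W; lra. Qed.

Lemma phi_lip : forall mu sigma a b, 0 < sigma ->
  Rabs (phi mu sigma a - phi mu sigma b) <=
  c0 sigma * ((Rabs a + Rabs b + 2 * Rabs mu) / (2 * sigma ^ 2)) * Rabs (a - b).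
Proof. intros. unfold phi. fold (c0 sigma). pose proof (c0_pos sigma H).
  rewrite <- Rmult_minus_distr_l, Rabs_mult, (Rabs_right (c0 sigma)) by lra.
  rewrite Rmult_assoc. apply Rmult_le_compat_l; [lra|].
  assert (Hs : 0 < 2 * sigma ^ 2) by nra.
  replace (- (a - mu) ^ 2 / (2 * sigma ^ 2)) with (- ((a - mu) ^ 2 / (2 * sigma ^ 2))) by (field; lra).
  replace (- (b - mu) ^ 2 / (2 * sigma ^ 2)) with (- ((b - mu) ^ 2 / (2 * sigma ^ 2))) by (field; lra).
  eapply Rle_trans. apply exp_neg_lip.
  apply Rmult_le_pos; [apply pow2_ge_0|left; apply Rinv_0_lt_compat; lra].
  apply Rmult_le_pos; [apply pow2_ge_0|left; apply Rinv_0_lt_compat; lra].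
  replace ((a - mu) ^ 2 / (2 * sigma ^ 2) - (b - mu) ^ 2 / (2 * sigma ^ 2)) with
    ((a - b) * (a + b - 2 * mu) / (2 * sigma ^ 2)) by (field; lra).
  unfold Rdiv. rewrite !Rabs_mult, Rabs_inv, (Rabs_right (2 * sigma ^ 2)) by lra.
  assert (Rabs (a + b - 2 * mu) <= Rabs a + Rabs b + 2 * Rabs mu).
  { unfold Rminus. eapply Rle_trans. apply Rabs_triang. eapply Rle_trans. apply Rplus_le_compat_r. apply Rabs_triang.
    rewrite Rabs_Ropp, Rabs_mult, (Rabs_right 2) by lra. lra. }
  pose proof (Rabs_pos (a - b)). pose proof (Rinv_0_lt_compat _ Hs).
  assert (Rabs (a - b) * Rabs (a + b - 2 * mu) <= Rabs (a - b) * (Rabs a + Rabs b + 2 * Rabs mu)) by (apply Rmult_le_compat_l; auto).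
  nra. Qed.

Lemma phi_int_eq : forall mu sigma T, 0 < sigma ->
  RInt (fun y => phi mu sigma y) (- T) T =
  / sqrt PI * RInt g (/ (sqrt 2 * sigma) * (- T) + (- mu * / (sqrt 2 * sigma)))
                     (/ (sqrt 2 * sigma) * T + (- mu * / (sqrt 2 * sigma))).
Proof. intros mu sigma T Hs.
  set (u := / (sqrt 2 * sigma)). set (v := - mu * u).
  assert (H2 : 0 < sqrt 2) by (apply sqrt_lt_R0; lra).
  assert (H22 : sqrt 2 * sqrt 2 = 2) by (apply sqrt_sqrt; lra).
  assert (HP : 0 < sqrt PI) by (apply sqrt_lt_R0; apply PI_RGT_0).
  assert (Hu : 0 < u) by (unfold u; apply Rinv_0_lt_compat; nra).
  assert (E2P : sqrt (2 * PI) = sqrt 2 * sqrt PI) by (apply sqrt_mult; pose proof PI_RGT_0; lra).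
  rewrite <- (RInt_comp_lin (V:=R_CompleteNormedModule) g u v (-T) T (g_ex _ _)).
  rewrite <- (RInt_scal (V:=R_CompleteNormedModule)).
  2:{ apply (ex_RInt_continuous (V:=R_CompleteNormedModule)). intros z _.
      apply continuity_pt_filterlim. unfold scal; simpl; unfold mult; simpl.
      apply continuity_pt_mult. apply continuity_pt_const; intros ? ?; auto.
      apply continuity_pt_comp with (f1 := fun y => u * y + v). 
      apply continuity_pt_plus. apply continuity_pt_mult. apply continuity_pt_const; intros ? ?; auto. apply continuity_pt_id.
      apply continuity_pt_const; intros ? ?; auto. apply gauss_cont. }
  apply RInt_ext. intros x _. unfold scal; simpl; unfold mult; simpl.
  unfold phi, g, MC.gaussR. rewrite E2P.
  replace (- ((u * x + v) * (u * x + v))) with (- (x - mu) ^ 2 / (2 * sigma ^ 2)).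
  - unfold u. field. repeat split; lra.
  - unfold v, u. transitivity (- (x - mu) ^ 2 / ((sqrt 2 * sqrt 2) * sigma ^ 2)). rewrite H22; reflexivity. field; lra. Qed.

Lemma K_cv : forall mu sigma, 0 < sigma ->
  Un_cv (fun m => RInt (fun y => phi mu sigma y) (- INR m) (INR m)) 1.
Proof. intros mu sigma Hs eps He.
  set (u := / (sqrt 2 * sigma)). set (v := - mu * u).
  assert (H2 : 0 < sqrt 2) by (apply sqrt_lt_R0; lra).
  assert (HP : 0 < sqrt PI) by (apply sqrt_lt_R0; apply PI_RGT_0).
  assert (Hu : 0 < u) by (unfold u; apply Rinv_0_lt_compat; nra).
  destruct (gauss_full (eps * sqrt PI) ltac:(nra)) as [X [X0 HX]].
  destruct (archimed ((X + Rabs v + 1) / u)) as [A _].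
  assert (Apos : 0 < IZR (up ((X + Rabs v + 1) / u))).
  { eapply Rle_lt_trans; [|exact A]. apply Rmult_le_pos; [pose proof (Rabs_pos v); lra|left; apply Rinv_0_lt_compat; auto]. }
  exists (Z.to_nat (up ((X + Rabs v + 1) / u))). intros m Hm. unfold R_dist.
  assert (Hm' : IZR (up ((X + Rabs v + 1) / u)) <= INR m).
  { apply lt_IZR in Apos. rewrite <- (Z2Nat.id (up ((X + Rabs v + 1) / u))) by lia. rewrite <- INR_IZR_INZ. apply le_INR; lia. }
  rewrite phi_int_eq by auto. fold u. fold v.
  assert (Hum : X + Rabs v + 1 < u * INR m).
  { apply Rmult_lt_reg_r with (/ u). apply Rinv_0_lt_compat; auto.
    replace (u * INR m * / u) with (INR m) by (field; lra). lra. }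
  pose proof (Rle_abs v). pose proof (Rle_abs (-v)). rewrite Rabs_Ropp in *.
  specialize (HX (u * - INR m + v) (u * INR m + v) ltac:(lra) ltac:(lra)).
  replace (/ sqrt PI * RInt g (u * - INR m + v) (u * INR m + v) - 1) with
    (/ sqrt PI * (RInt g (u * - INR m + v) (u * INR m + v) - sqrt PI)) by (field; lra).
  rewrite Rabs_mult, Rabs_inv, (Rabs_right (sqrt PI)) by lra.
  apply Rmult_lt_reg_l with (sqrt PI); auto. rewrite <- Rmult_assoc, Rinv_r, Rmult_1_l by lra. lra. Qed.


Lemma ml_best_spec : forall n sigma C y k, (1 <= k)%nat ->
  (ml_best n sigma C y k < k)%nat /\
  forall u, (u < k)%nat -> w n sigma y (C u) <= w n sigma y (C (ml_best n sigma C y k)).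
Proof. intros n sigma C y k Hk. induction k as [|k IH]; [lia|].
  destruct k as [|k'].
  - simpl. split; [lia|]. intros u Hu. assert (u = 0%nat) by lia. subst; lra.
  - specialize (IH ltac:(lia)). destruct IH as [IH1 IH2].
    change (ml_best n sigma C y (S (S k'))) with
      (let b := ml_best n sigma C y (S k') in
       if Rlt_dec (w n sigma y (C b)) (w n sigma y (C (S k'))) then S k' else b).
    cbv zeta. destruct (Rlt_dec _ _) as [Hlt|Hge].
    + split; [lia|]. intros u Hu. destruct (Nat.eq_dec u (S k')). subst; lra.
      specialize (IH2 u ltac:(lia)). lra.
    + split; [lia|]. intros u Hu. destruct (Nat.eq_dec u (S k')). subst; lra.
      apply IH2; lia. Qed.

Lemma rsum_ind : forall K (a : nat -> R) d, (d < K)%nat ->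
  rsum K (fun v => a v * (if Nat.eqb d v then 0 else 1)) = rsum K a - a d.
Proof. induction K; intros a d Hd; [lia|]. simpl.
  destruct (Nat.eq_dec d K).
  - subst. rewrite Nat.eqb_refl.
    rewrite (rsum_ext K _ a). ring. intros k Hk. destruct (Nat.eqb_spec K k); [lia|ring].
  - rewrite IHK by lia. destruct (Nat.eqb_spec d K); [lia|]. ring. Qed.

Definition Wf (n M : nat) (sigma : R) (C : codebook) (y : vecR) : R :=
  w n sigma y (C (ml_decode n M sigma C y)).
Definition Sf (n M : nat) (sigma : R) (C : codebook) (y : vecR) : R :=
  rsum M (fun v => w n sigma y (C v)).

Lemma integrand_eq : forall n M sigma C y, (1 <= M)%nat ->
  / INR M * rsum M (fun v => w n sigma y (C v) * err_ind n M sigma C v y) =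
  / INR M * (Sf n M sigma C y - Wf n M sigma C y).
Proof. intros. f_equal. unfold err_ind, Sf, Wf. apply rsum_ind.
  unfold ml_decode. apply ml_best_spec; auto. Qed.

Lemma w_nonneg : forall n sigma y x, 0 < sigma -> 0 <= w n sigma y x.
Proof. intros. unfold w. apply rprod_nonneg. intros; apply phi_bnd; auto. Qed.

Lemma Wf_le_Sf : forall n M sigma C y, 0 < sigma -> (1 <= M)%nat -> Wf n M sigma C y <= Sf n M sigma C y.
Proof. intros. unfold Wf, Sf. apply rsum_elem with (f := fun v => w n sigma y (C v)).
  unfold ml_decode; apply ml_best_spec; auto. intros; apply w_nonneg; auto. Qed.

Lemma lip_prod : forall d (F : nat -> R -> R) B Lam T y z, 1 <= B -> 0 <= Lam ->
  (forall i t, (i < d)%nat -> Rabs t <= T -> Rabs (F i t) <= B) ->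
  (forall i a b, (i < d)%nat -> Rabs a <= T -> Rabs b <= T -> Rabs (F i a - F i b) <= Lam * Rabs (a - b)) ->
  InBox d T y -> InBox d T z ->
  Rabs (rprod d (fun i => F i (y i)) - rprod d (fun i => F i (z i))) <= B ^ d * Lam * rsum d (fun i => Rabs (y i - z i))
  /\ Rabs (rprod d (fun i => F i (z i))) <= B ^ d.
Proof. induction d; intros F B Lam T y z HB HL Hb Hl Hy Hz.
  - simpl. rewrite Rminus_eq_0, Rabs_R0, Rabs_R1. lra.
  - destruct (IHd F B Lam T y z HB HL) as [I1 I2].
    { intros; apply Hb; auto; lia. } { intros; apply Hl; auto; lia. }
    { intros i Hi; apply Hy; lia. } { intros i Hi; apply Hz; lia. }
    cbn [rprod rsum pow].
    set (P := rprod d (fun i => F i (y i))) in *. set (Q := rprod d (fun i => F i (z i))) in *.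
    assert (Ba : Rabs (F d (y d)) <= B) by (apply Hb; auto; apply Hy; lia).
    assert (Bb : Rabs (F d (z d)) <= B) by (apply Hb; auto; apply Hz; lia).
    assert (Lab : Rabs (F d (y d) - F d (z d)) <= Lam * Rabs (y d - z d)) by (apply Hl; [lia|apply Hy; lia|apply Hz; lia]).
    assert (Bd1 : 1 <= B ^ d) by (apply pow_R1_Rle; auto).
    assert (Hs : 0 <= rsum d (fun i => Rabs (y i - z i))) by (apply rsum_nonneg; intros; apply Rabs_pos).
    split.
    + replace (P * F d (y d) - Q * F d (z d)) with ((P - Q) * F d (y d) + Q * (F d (y d) - F d (z d))) by ring.
      eapply Rle_trans. apply Rabs_triang. rewrite !Rabs_mult.
      assert (A1 : Rabs (P - Q) * Rabs (F d (y d)) <= B ^ d * Lam * rsum d (fun i => Rabs (y i - z i)) * B).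
      { apply Rmult_le_compat; auto; apply Rabs_pos. }
      assert (A2 : Rabs Q * Rabs (F d (y d) - F d (z d)) <= B ^ d * (Lam * Rabs (y d - z d))).
      { apply Rmult_le_compat; auto; apply Rabs_pos. }
      pose proof (Rabs_pos (y d - z d)).
      assert (B ^ d * (Lam * Rabs (y d - z d)) <= B * B ^ d * (Lam * Rabs (y d - z d))).
      { assert (X0 : 0 <= Lam * Rabs (y d - z d)) by (apply Rmult_le_pos; auto).
        assert (0 <= B ^ d * (Lam * Rabs (y d - z d))) by (apply Rmult_le_pos; lra).
        replace (B * B ^ d * (Lam * Rabs (y d - z d))) with (B * (B ^ d * (Lam * Rabs (y d - z d)))) by ring.
        nra. }
      lra.
    + rewrite Rabs_mult. rewrite Rmult_comm. apply Rmult_le_compat; auto; apply Rabs_pos. Qed.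

Lemma w_LipB : forall d sigma x T Mx, 0 < sigma -> 0 <= T -> 0 <= Mx ->
  (forall i, (i < d)%nat -> Rabs (x i) <= Mx) ->
  LipB d T (Rmax 1 (c0 sigma) ^ d * (c0 sigma * ((2 * T + 2 * Mx) / (2 * sigma ^ 2))))
    (fun y => w d sigma y x).
Proof. intros d sigma x T Mx Hs HT HMx HM y z Hy Hz _. unfold w.
  assert (Hc : 0 < c0 sigma) by (apply c0_pos; auto).
  assert (Hs2 : 0 < 2 * sigma ^ 2) by nra.
  assert (HL : 0 <= c0 sigma * ((2 * T + 2 * Mx) / (2 * sigma ^ 2))).
  { apply Rmult_le_pos; [lra|]. apply Rmult_le_pos; [lra|left; apply Rinv_0_lt_compat; auto]. }
  destruct (lip_prod d (fun i t => phi (x i) sigma t) (Rmax 1 (c0 sigma)) _ T y z (Rmax_l _ _) HL) as [H _]; auto.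
  - intros i t _ _. rewrite Rabs_right by (apply Rle_ge; apply phi_bnd; auto).
    eapply Rle_trans; [apply phi_bnd; auto|apply Rmax_r].
  - intros i a b Hi Ha Hb. eapply Rle_trans. apply phi_lip; auto.
    apply Rmult_le_compat_r; [apply Rabs_pos|]. apply Rmult_le_compat_l; [lra|].
    apply Rmult_le_compat_r; [left; apply Rinv_0_lt_compat; auto|]. specialize (HM i Hi). lra. Qed.

Lemma LipB_ext : forall d T L f g, (forall y, f y = g y) -> LipB d T L f -> LipB d T L g.
Proof. intros d T L f g E H y z Hy Hz He. rewrite <- !E. auto. Qed.

Lemma Wf_LipB : forall d M sigma C T L, (1 <= M)%nat ->
  (forall v, (v < M)%nat -> LipB d T L (fun y => w d sigma y (C v))) ->
  LipB d T L (Wf d M sigma C).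
Proof. intros d M sigma C T L HM H y z Hy Hz He. unfold Wf, ml_decode.
  destruct (ml_best_spec d sigma C y M HM) as [Ay By].
  destruct (ml_best_spec d sigma C z M HM) as [Az Bz].
  set (a := ml_best d sigma C y M) in *. set (b := ml_best d sigma C z M) in *.
  specialize (By b Az). specialize (Bz a Ay).
  pose proof (H a Ay y z Hy Hz He) as Ha. pose proof (H b Az y z Hy Hz He) as Hb.
  apply Rabs_le. apply Rabs_le_between in Ha. apply Rabs_le_between in Hb. lra. Qed.

Lemma Sf_LipB : forall d M sigma C T L,
  (forall v, (v < M)%nat -> LipB d T L (fun y => w d sigma y (C v))) ->
  LipB d T (INR M * L) (Sf d M sigma C).
Proof. intros d M sigma C T L H y z Hy Hz He. unfold Sf. rewrite <- rsum_minus.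
  eapply Rle_trans. apply rsum_abs. rewrite Rmult_assoc, <- rsum_const.
  apply rsum_le. intros k Hk. apply H; auto. Qed.

Lemma f_LipB : forall d M sigma C T L, (1 <= M)%nat ->
  (forall v, (v < M)%nat -> LipB d T L (fun y => w d sigma y (C v))) ->
  LipB d T (/ INR M * (INR M * L + L))
    (fun y => / INR M * rsum M (fun v => w d sigma y (C v) * err_ind d M sigma C v y)).
Proof. intros d M sigma C T L HM H.
  apply LipB_ext with (f := fun y => / INR M * (Sf d M sigma C y - Wf d M sigma C y)).
  intros; symmetry; apply integrand_eq; auto.
  intros y z Hy Hz He.
  assert (HMp : 0 < INR M) by (apply lt_0_INR; lia).
  pose proof (Sf_LipB d M sigma C T L H y z Hy Hz He).
  pose proof (Wf_LipB d M sigma C T L HM H y z Hy Hz He).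
  replace (/ INR M * (Sf d M sigma C y - Wf d M sigma C y) - / INR M * (Sf d M sigma C z - Wf d M sigma C z))
    with (/ INR M * ((Sf d M sigma C y - Sf d M sigma C z) - (Wf d M sigma C y - Wf d M sigma C z))) by ring.
  rewrite Rabs_mult, Rabs_right by (apply Rle_ge; left; apply Rinv_0_lt_compat; auto).
  rewrite Rmult_assoc. apply Rmult_le_compat_l. left; apply Rinv_0_lt_compat; auto.
  unfold Rminus at 1. eapply Rle_trans. apply Rabs_triang. rewrite Rabs_Ropp. lra. Qed.

Definition R1 (sigma : R) (N : nat) (T mu : R) : R :=
  rsum N (fun k => phi mu sigma (gx N T k)) * (2 * T / INR N).

Lemma rprod_scal_pow : forall d f c, rprod d f * c ^ d = rprod d (fun i => f i * c).
Proof. induction d; intros; simpl; [ring|]. rewrite <- IHd. ring. Qed.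

Lemma RB_w : forall d sigma N T x,
  riemann_box d N T (fun y => w d sigma y x) = rprod d (fun i => R1 sigma N T (x i)).
Proof. intros. unfold riemann_box, w. rewrite grid_sum_prod with (g := fun i t => phi (x i) sigma t).
  rewrite rprod_scal_pow. reflexivity. Qed.

Lemma RB_Sf : forall d M sigma C N T,
  riemann_box d N T (Sf d M sigma C) = rsum M (fun v => rprod d (fun i => R1 sigma N T (C v i))).
Proof. intros. unfold Sf. unfold riemann_box at 1.
  rewrite grid_sum_rsum with (F := fun v y => w d sigma y (C v)). rewrite rsum_scal_r.
  apply rsum_ext. intros. rewrite <- RB_w. reflexivity. Qed.

Lemma R1_cv : forall sigma T mu, 0 < sigma -> 0 <= T ->
  Un_cv (fun N => R1 sigma (S N) T mu) (RInt (fun y => phi mu sigma y) (- T) T).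
Proof. intros sigma T mu Hs HT.
  assert (HL := w_LipB 1 sigma (fun _ => mu) T (Rabs mu) Hs HT (Rabs_pos mu) ltac:(intros; lra)).
  assert (HL0 : 0 <= Rmax 1 (c0 sigma) ^ 1 * (c0 sigma * ((2 * T + 2 * Rabs mu) / (2 * sigma ^ 2)))).
  { pose proof (c0_pos sigma Hs). pose proof (Rabs_pos mu). apply Rmult_le_pos. apply pow_le. pose proof (Rmax_l 1 (c0 sigma)); lra.
    apply Rmult_le_pos; [lra|]. apply Rmult_le_pos; [lra|left; apply Rinv_0_lt_compat; nra]. }
  pose proof (conv_cv 1 T _ _ HT HL0 HL) as Hc.
  replace (RInt (fun y => phi mu sigma y) (- T) T) with (Iint 1 T (fun y => w 1 sigma y (fun _ => mu))).
  - intros eps He. destruct (Hc eps He) as [N0 HN]. exists N0. intros n Hn. specialize (HN n Hn).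
    rewrite RB_w in HN. simpl rprod in HN. rewrite Rmult_1_l in HN. exact HN.
  - simpl. apply RInt_ext. intros x Hx. unfold w. simpl. rewrite Rmult_1_l.
    rewrite Rmin_left, Rmax_right in Hx by lra. unfold upd; simpl. rewrite clamp_id by lra. reflexivity. Qed.

Lemma cv_rprod : forall d (u : nat -> nat -> R) l, (forall i, (i < d)%nat -> Un_cv (u i) (l i)) ->
  Un_cv (fun N => rprod d (fun i => u i N)) (rprod d l).
Proof. induction d; intros u l H; simpl.
  - intros eps He. exists 0%nat. intros. unfold R_dist. rewrite Rminus_eq_0, Rabs_R0. lra.
  - apply CV_mult. apply IHd. intros; apply H; lia. apply H; lia. Qed.

Lemma cv_rsum : forall d (u : nat -> nat -> R) l, (forall i, (i < d)%nat -> Un_cv (u i) (l i)) ->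
  Un_cv (fun N => rsum d (fun i => u i N)) (rsum d l).
Proof. induction d; intros u l H; simpl.
  - intros eps He. exists 0%nat. intros. unfold R_dist. rewrite Rminus_eq_0, Rabs_R0. lra.
  - apply CV_plus. apply IHd. intros; apply H; lia. apply H; lia. Qed.

Definition Cext (n : nat) (C : codebook) (a : nat -> R) : codebook := fun v => upd (C v) n (a v).

Lemma w_split : forall n sigma C a y t v,
  w (S n) sigma (upd y n t) (Cext n C a v) = w n sigma y (C v) * phi (a v) sigma t.
Proof. intros. unfold w, Cext. cbn [rprod]. unfold upd at 3 4. rewrite Nat.eqb_refl. f_equal.
  apply rprod_ext. intros i Hi. unfold upd. destruct (Nat.eqb_spec i n); [lia|reflexivity]. Qed.

Lemma key_ineq : forall n M sigma C a N T, (1 <= M)%nat -> (0 < N)%nat -> 0 <= T -> 0 < sigma ->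
  (1 - rsum M (fun v => Rabs (1 - R1 sigma N T (a v)))) * riemann_box n N T (Wf n M sigma C)
  <= riemann_box (S n) N T (Wf (S n) M sigma (Cext n C a)).
Proof. intros n M sigma C a N T HM HN HT Hs.
  set (lam := 1 - rsum M (fun v => Rabs (1 - R1 sigma N T (a v)))).
  set (h := 2 * T / INR N).
  assert (Hh : 0 <= h) by (unfold h, Rdiv; apply Rmult_le_pos; [lra|left; apply Rinv_0_lt_compat; apply lt_0_INR; lia]).
  set (dec := fun y => ml_decode n M sigma C y).
  assert (Hdec : forall y, (dec y < M)%nat) by (intros; apply ml_best_spec; auto).
  unfold riemann_box. rewrite grid_sum_S. fold h.
  apply Rle_trans with (rsum N (fun k => grid_sum n N T (fun y => Wf n M sigma C y * phi (a (dec y)) sigma (gx N T k))) * h ^ S n).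
  2:{ apply Rmult_le_compat_r. apply pow_le; auto. apply rsum_le. intros k Hk. apply grid_sum_le. intros y.
      unfold Wf. change (ml_decode n M sigma C y) with (dec y).
      rewrite <- (w_split n sigma C a y (gx N T k) (dec y)). unfold ml_decode.
      apply ml_best_spec; auto. }
  rewrite <- grid_sum_rsum with (F := fun k y => Wf n M sigma C y * phi (a (dec y)) sigma (gx N T k)).
  assert (E : grid_sum n N T (fun y => rsum N (fun k => Wf n M sigma C y * phi (a (dec y)) sigma (gx N T k))) * h ^ S n
     = grid_sum n N T (fun y => Wf n M sigma C y * R1 sigma N T (a (dec y))) * h ^ n).
  { rewrite (grid_sum_ext n N T (fun y => Wf n M sigma C y * R1 sigma N T (a (dec y)))
      (fun y => h * rsum N (fun k => Wf n M sigma C y * phi (a (dec y)) sigma (gx N T k)))).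
    rewrite grid_sum_scal. simpl pow. ring.
    intros y. unfold R1. fold h. rewrite <- rsum_scal_l. ring. }
  rewrite E. rewrite <- Rmult_assoc, <- grid_sum_scal. apply Rmult_le_compat_r. apply pow_le; auto.
  apply grid_sum_le. intros y.
  assert (W0 : 0 <= Wf n M sigma C y) by (apply w_nonneg; auto).
  assert (R1 sigma N T (a (dec y)) >= lam).
  { unfold lam. pose proof (rsum_elem M (fun v => Rabs (1 - R1 sigma N T (a v))) (dec y) (Hdec y) ltac:(intros; apply Rabs_pos)).
    simpl in H. pose proof (Rle_abs (1 - R1 sigma N T (a (dec y)))). lra. }
  nra. Qed.


Lemma RB_ext : forall d N T f g, (forall y, f y = g y) -> riemann_box d N T f = riemann_box d N T g.
Proof. intros d N T f g0 H. unfold riemann_box. rewrite (grid_sum_ext d N T f g0); auto. Qed.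

Lemma RB_lin : forall d N T c f g,
  riemann_box d N T (fun y => c * (f y - g y)) = c * (riemann_box d N T f - riemann_box d N T g).
Proof. intros. unfold riemann_box. rewrite grid_sum_scal, grid_sum_minus. ring. Qed.

Lemma RB_le : forall d N T f g, 0 <= T -> (0 < N)%nat -> (forall y, f y <= g y) ->
  riemann_box d N T f <= riemann_box d N T g.
Proof. intros. unfold riemann_box. apply Rmult_le_compat_r. apply pow_le.
  unfold Rdiv; apply Rmult_le_pos; [lra|left; apply Rinv_0_lt_compat; apply lt_0_INR; lia].
  apply grid_sum_le; auto. Qed.

Lemma rprod_one : forall d, rprod d (fun _ => 1) = 1.
Proof. induction d; simpl; auto. rewrite IHd; ring. Qed.

Lemma cv_const : forall c, Un_cv (fun _ : nat => c) c.
Proof. intros c eps He. exists 0%nat. intros. unfold R_dist. rewrite Rminus_eq_0, Rabs_R0. lra. Qed.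

Lemma cv_scal : forall u l c, Un_cv u l -> Un_cv (fun N => c * u N) (c * l).
Proof. intros. apply CV_mult; auto. apply cv_const. Qed.

Lemma cv_ext : forall u v l, (forall N, u N = v N) -> Un_cv u l -> Un_cv v l.
Proof. intros u v l E H eps He. destruct (H eps He) as [N0 HN]. exists N0. intros. rewrite <- E. auto. Qed.

Lemma main_step : forall n M Ups sigma C p, (1 <= n)%nat -> (2 <= M)%nat -> 0 < Ups -> 0 < sigma ->
  F_m n M Ups C -> Pe_is n M sigma C p ->
  exists C' p', F_e (S n) M (INR n * Ups / INR (S n)) C' /\ Pe_is (S n) M sigma C' p' /\ p' <= p.
Proof.
  intros n M Ups sigma C p Hn HM HU Hs HFm HPe.
  assert (HM1 : (1 <= M)%nat) by lia.
  assert (HMp : 0 < INR M) by (apply lt_0_INR; lia).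
  set (a := fun v => sqrt (INR n * Ups - sqnorm n (C v))).
  set (C' := Cext n C a).
  exists C'.
  assert (HFe : F_e (S n) M (INR n * Ups / INR (S n)) C').
  { intros v Hv. unfold sqnorm. cbn [rsum]. unfold C', Cext, upd. rewrite Nat.eqb_refl.
    rewrite (rsum_ext n _ (fun i => C v i ^ 2)).
    2:{ intros k Hk. destruct (Nat.eqb_spec k n); [lia|reflexivity]. }
    fold (sqnorm n (C v)). unfold a. rewrite pow2_sqrt by (specialize (HFm v Hv); lra).
    field. apply not_0_INR; lia. }
  set (Mx := rsum M (fun v => rsum (S n) (fun i => Rabs (C' v i)))).
  assert (HMx0 : 0 <= Mx) by (apply rsum_nonneg; intros; apply rsum_nonneg; intros; apply Rabs_pos).
  assert (HMxb : forall v i, (v < M)%nat -> (i < S n)%nat -> Rabs (C' v i) <= Mx).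
  { intros v i Hv Hi. eapply Rle_trans.
    apply (rsum_elem (S n) (fun i => Rabs (C' v i)) i Hi); intros; apply Rabs_pos.
    apply (rsum_elem M (fun v => rsum (S n) (fun i => Rabs (C' v i))) v Hv).
    intros; apply rsum_nonneg; intros; apply Rabs_pos. }
  set (LT := fun T => Rmax 1 (c0 sigma) ^ (S n) * (c0 sigma * ((2 * T + 2 * Mx) / (2 * sigma ^ 2)))).
  assert (HLT : forall T, 0 <= T -> 0 <= LT T).
  { intros T HT. pose proof (c0_pos sigma Hs). unfold LT. apply Rmult_le_pos. apply pow_le. pose proof (Rmax_l 1 (c0 sigma)); lra.
    apply Rmult_le_pos; [lra|]. apply Rmult_le_pos; [lra|left; apply Rinv_0_lt_compat; nra]. }
  assert (Hwl : forall T v, 0 <= T -> (v < M)%nat -> LipB (S n) T (LT T) (fun y => w (S n) sigma y (C' v))).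
  { intros T v HT Hv. apply w_LipB; auto. }
  set (W' := Wf (S n) M sigma C').
  set (S' := Sf (S n) M sigma C').
  set (W := Wf n M sigma C).
  set (S0 := Sf n M sigma C).
  set (f' := fun y => / INR M * rsum M (fun v => w (S n) sigma y (C' v) * err_ind (S n) M sigma C' v y)).
  set (f0 := fun y => / INR M * rsum M (fun v => w n sigma y (C v) * err_ind n M sigma C v y)).
  assert (HW'L : forall T, 0 <= T -> LipB (S n) T (LT T) W').
  { intros. apply Wf_LipB; auto. }
  set (K := fun (m : nat) mu => RInt (fun y => phi mu sigma y) (- INR m) (INR m)).
  set (S'm := fun m => rsum M (fun v => rprod (S n) (fun i => K m (C' v i)))).
  set (Sm := fun m => rsum M (fun v => rprod n (fun i => K m (C v i)))).
  assert (LS' : forall m, Un_cv (fun N => riemann_box (S n) (S N) (INR m) S') (S'm m)).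
  { intros m. apply cv_ext with (u := fun N => rsum M (fun v => rprod (S n) (fun i => R1 sigma (S N) (INR m) (C' v i)))).
    intros; unfold S'; rewrite RB_Sf; reflexivity.
    apply cv_rsum with (u := fun v N => rprod (S n) (fun i => R1 sigma (S N) (INR m) (C' v i))). intros v Hv.
    apply cv_rprod with (u := fun i N => R1 sigma (S N) (INR m) (C' v i)). intros i Hi.
    apply R1_cv; auto. apply pos_INR. }
  assert (LS : forall m, Un_cv (fun N => riemann_box n (S N) (INR m) S0) (Sm m)).
  { intros m. apply cv_ext with (u := fun N => rsum M (fun v => rprod n (fun i => R1 sigma (S N) (INR m) (C v i)))).
    intros; unfold S0; rewrite RB_Sf; reflexivity.
    apply cv_rsum with (u := fun v N => rprod n (fun i => R1 sigma (S N) (INR m) (C v i))). intros v Hv.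
    apply cv_rprod with (u := fun i N => R1 sigma (S N) (INR m) (C v i)). intros i Hi.
    apply R1_cv; auto. apply pos_INR. }
  set (Xm := fun m => Iint (S n) (INR m) W').
  assert (LX : forall m, Un_cv (fun N => riemann_box (S n) (S N) (INR m) W') (Xm m)).
  { intros m. apply conv_cv with (L := LT (INR m)). apply pos_INR. apply HLT, pos_INR. apply HW'L, pos_INR. }
  set (B'm := fun m => / INR M * (S'm m - Xm m)).
  assert (LB' : forall m, Un_cv (fun N => riemann_box (S n) (S N) (INR m) f') (B'm m)).
  { intros m. apply cv_ext with (u := fun N => / INR M * (riemann_box (S n) (S N) (INR m) S' - riemann_box (S n) (S N) (INR m) W')).
    - intros N. rewrite <- RB_lin. apply RB_ext. intros y. unfold f'. rewrite integrand_eq; auto.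
    - apply cv_scal. apply CV_minus; auto. }
  destruct HPe as [Bm [HBm HBp]].
  set (Ym := fun m => Sm m - INR M * Bm m).
  assert (LY : forall m, Un_cv (fun N => riemann_box n (S N) (INR m) W) (Ym m)).
  { intros m. apply cv_ext with (u := fun N => riemann_box n (S N) (INR m) S0 - INR M * riemann_box n (S N) (INR m) f0).
    - intros N. rewrite (RB_ext n (S N) (INR m) f0 (fun y => / INR M * (S0 y - W y))).
      rewrite RB_lin. field. lra. intros y. unfold f0. rewrite integrand_eq; auto.
    - apply CV_minus; auto. apply cv_scal. apply HBm. }
  set (lamm := fun m => 1 - rsum M (fun v => Rabs (1 - K m (a v)))).
  assert (Llam : forall m, Un_cv (fun N => 1 - rsum M (fun v => Rabs (1 - R1 sigma (S N) (INR m) (a v)))) (lamm m)).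
  { intros m. apply CV_minus. apply cv_const.
    apply cv_rsum with (u := fun v N => Rabs (1 - R1 sigma (S N) (INR m) (a v))). intros v Hv.
    apply cv_cvabs with (Un := fun N => 1 - R1 sigma (S N) (INR m) (a v)). apply CV_minus. apply cv_const.
    apply R1_cv; auto. apply pos_INR. }
  assert (KI : forall m, lamm m * Ym m <= Xm m).
  { intros m. eapply Rle_cv_lim with (Un := fun N => (1 - rsum M (fun v => Rabs (1 - R1 sigma (S N) (INR m) (a v)))) * riemann_box n (S N) (INR m) W).
    - intros N. apply key_ineq; auto. lia. apply pos_INR.
    - apply CV_mult; auto.
    - apply LX. }
  assert (cv_eq : forall u l l', Un_cv u l -> l = l' -> Un_cv u l') by (intros; subst; auto).
  assert (LK : forall mu, Un_cv (fun m => K m mu) 1) by (intros; apply K_cv; auto).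
  assert (MS' : Un_cv S'm (INR M)).
  { apply cv_eq with (rsum M (fun _ => rprod (S n) (fun _ => 1))).
    apply cv_rsum with (u := fun v m => rprod (S n) (fun i => K m (C' v i))). intros v Hv.
    apply cv_rprod with (u := fun i m => K m (C' v i)). intros; apply LK.
    rewrite rprod_one, rsum_const; ring. }
  assert (MS : Un_cv Sm (INR M)).
  { apply cv_eq with (rsum M (fun _ => rprod n (fun _ => 1))).
    apply cv_rsum with (u := fun v m => rprod n (fun i => K m (C v i))). intros v Hv.
    apply cv_rprod with (u := fun i m => K m (C v i)). intros; apply LK.
    rewrite rprod_one, rsum_const; ring. }
  assert (Mlam : Un_cv lamm 1).
  { apply cv_eq with (1 - rsum M (fun _ => Rabs (1 - 1))).
    apply CV_minus. apply cv_const.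
    apply cv_rsum with (u := fun v m => Rabs (1 - K m (a v))). intros v Hv.
    apply cv_cvabs with (Un := fun m => 1 - K m (a v)). apply CV_minus. apply cv_const. apply LK.
    rewrite Rminus_eq_0, Rabs_R0, rsum_const. ring. }
  assert (MY : Un_cv Ym (INR M - INR M * p)).
  { apply CV_minus; auto. apply cv_scal; auto. }
  assert (Xgrow : Un_growing Xm).
  { intros m. unfold Xm. apply Iint_box_mono with (L := LT (INR (S m))).
    apply pos_INR. apply le_INR; lia. apply HLT, pos_INR. apply HW'L, pos_INR.
    intros y. apply w_nonneg; auto. }
  assert (XleS : forall m, Xm m <= S'm m).
  { intros m. eapply Rle_cv_lim; [|apply LX|apply LS'].
    intros N. apply RB_le. apply pos_INR. lia. intros y. apply Wf_le_Sf; auto. }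
  destruct (maj_by_pos S'm (exist _ (INR M) MS')) as [ub [_ Hub]].
  assert (Xub : has_ub Xm).
  { exists ub. intros x [i Hi]. subst x. eapply Rle_trans. apply XleS. eapply Rle_trans. apply Rle_abs. apply Hub. }
  destruct (growing_cv Xm Xgrow Xub) as [Xinf HXinf].
  exists (/ INR M * (INR M - Xinf)).
  split; [exact HFe|]. split.
  - exists B'm. split. exact LB'. unfold B'm. apply cv_scal. apply CV_minus; auto.
  - apply Rle_cv_lim with (Un := B'm) (Vn := fun m => / INR M * (S'm m - lamm m * Ym m)).
    + intros m. unfold B'm. apply Rmult_le_compat_l. left; apply Rinv_0_lt_compat; auto.
      specialize (KI m). lra.
    + unfold B'm. apply cv_scal. apply CV_minus; auto.
    + apply cv_eq with (/ INR M * (INR M - 1 * (INR M - INR M * p))).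
      apply cv_scal. apply CV_minus; auto. apply CV_mult; auto.
      field. lra.
Qed.

Theorem mainTheorem1 :
  forall (n M : nat) (Ups sigma : R),
    (1 <= n)%nat -> (2 <= M)%nat -> 0 < Ups -> 0 < sigma ->
    forall em ee : R,
      eps_star F_m n M Ups sigma em ->
      eps_star F_e (S n) M (INR n * Ups / INR (S n)) sigma ee ->
      em >= ee.
Proof.
  intros n M Ups sigma Hn HM HU Hs em ee [_ Hm] [He _].
  apply Rle_ge. apply Hm. intros x [C [HC HPe]].
  destruct (main_step n M Ups sigma C x Hn HM HU Hs HC HPe) as [C' [p' [H1 [H2 H3]]]].
  apply Rle_trans with p'; auto. apply He. exists C'. split; auto.
Qed.
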